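(* Let $(\mathcal{C},d,\eta)$ be a monoidal anti-involutive category, with $d$ having monoidal structure $\chi_{c_1,c_2}\colon dc_1\otimes dc_2\to d(c_1\otimes c_2)$ and $u\colon1\to d(1)$. Then defining $(c_1,h_1)\otimes(c_2,h_2):=(c_1\otimes c_2,\ \chi_{c_1,c_2}\circ(h_1\otimes h_2))$, with unit $(1,u)$ and with associators and unitors those of $\mathcal{C}$, makes $\mathrm{Herm}\,\mathcal{C}$ into a monoidal dagger category.
   Context: An anti-involutive category $(\mathcal{C},d,\eta)$: functor $d\colon\mathcal{C}\to\mathcal{C}^{\mathrm{op}}$ and natural isomorphism $\eta\colon\mathrm{id}_{\mathcal{C}}\Rightarrow d^2$ with $d(\eta_c)\circ\eta_{dc}=\mathrm{id}_{dc}$. It is monoidal if $\mathcal{C}$ is monoidal, $d$ is a (strong) monoidal functor $\mathcal{C}\to\mathcal{C}^{\mathrm{op}}$ (where $\mathcal{C}^{\mathrm{op}}$ reverses composition but not the tensor product) and $\eta$ is a monoidal natural transformation. A Hermitian pairing on $c$ is an isomorphism $h\colon c\to dc$ with $d(h)\circ\eta_c=h$. $\mathrm{Herm}\,\mathcal{C}$ has objects $(c,h)$, morphisms $(c_1,h_1)\to(c_2,h_2)$ all morphisms $c_1\to c_2$ in $\mathcal{C}$, and dagger $f^\dagger=h_1^{-1}\circ d(f)\circ h_2$. A monoidal dagger category is a dagger category ($\dagger$ identity on objects, $f^{\dagger\dagger}=f$) with a monoidal structure such that $(f\otimes g)^\dagger=f^\dagger\otimes g^\dagger$ and associator and unitors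 are unitary ($u^\dagger=u^{-1}$). *)

(* Defs.v *)
Record Category := {
  ob : Type;
  hom : ob -> ob -> Type;
  comp : forall a b c, hom b c -> hom a b -> hom a c;
  idm : forall a, hom a a;
  comp_idl : forall a b (f : hom a b), comp a b b (idm b) f = f;
  comp_idr : forall a b (f : hom a b), comp a a b f (idm a) = f;
  comp_assoc : forall a b c e (f : hom a b) (g : hom b c) (h : hom c e),
      comp a c e h (comp a b c g f) = comp a b e (comp b c e h g) f
}.
Arguments ob : clear implicits.
Arguments hom {_} a b.
Arguments comp {_ a b c} g f.
Arguments idm {_} a.

Notation "g ∘ f" := (comp g f) (at level 40, left associativity).

Record MonoidalData (C : Category) := {
  tens : ob C -> ob C -> ob C;
  tensm : forall a b a' b', hom a a' -> hom b b' -> hom (tens a b) (tens a' b');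
  munit : ob C;
  assoc : forall a b c, hom (tens (tens a b) c) (tens a (tens b c));
  assoc_inv : forall a b c, hom (tens a (tens b c)) (tens (tens a b) c);
  lunit : forall a, hom (tens munit a) a;
  lunit_inv : forall a, hom a (tens munit a);
  runit : forall a, hom (tens a munit) a;
  runit_inv : forall a, hom a (tens a munit)
}.
Arguments tens {C} _ a b.
Arguments tensm {C} _ {a b a' b'} f g.
Arguments munit {C} _.
Arguments assoc {C} _ a b c.
Arguments assoc_inv {C} _ a b c.
Arguments lunit {C} _ a.
Arguments lunit_inv {C} _ a.
Arguments runit {C} _ a.
Arguments runit_inv {C} _ a.

Record MonoidalLaws (C : Category) (M : MonoidalData C) : Prop := {
  tensm_id : forall a b, tensm M (idm a) (idm b) = idm (tens M a b);
  tensm_comp : forall a b a' b' a'' b'' (f : hom a a') (f' : hom a' a'')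
      (g : hom b b') (g' : hom b' b''),
      tensm M (f' ∘ f) (g' ∘ g) = tensm M f' g' ∘ tensm M f g;
  assoc_iso1 : forall a b c, assoc_inv M a b c ∘ assoc M a b c = idm _;
  assoc_iso2 : forall a b c, assoc M a b c ∘ assoc_inv M a b c = idm _;
  assoc_nat : forall a b c a' b' c' (f : hom a a') (g : hom b b') (h : hom c c'),
      assoc M a' b' c' ∘ tensm M (tensm M f g) h
      = tensm M f (tensm M g h) ∘ assoc M a b c;
  lunit_iso1 : forall a, lunit_inv M a ∘ lunit M a = idm _;
  lunit_iso2 : forall a, lunit M a ∘ lunit_inv M a = idm _;
  lunit_nat : forall a b (f : hom a b),
      lunit M b ∘ tensm M (idm (munit M)) f = f ∘ lunit M a;
  runit_iso1 : forall a, runit_inv M a ∘ runit M a = idm _;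
  runit_iso2 : forall a, runit M a ∘ runit_inv M a = idm _;
  runit_nat : forall a b (f : hom a b),
      runit M b ∘ tensm M f (idm (munit M)) = f ∘ runit M a;
  pentagon : forall a b c e,
      tensm M (idm a) (assoc M b c e) ∘ assoc M a (tens M b c) e
        ∘ tensm M (assoc M a b c) (idm e)
      = assoc M a b (tens M c e) ∘ assoc M (tens M a b) c e;
  triangle : forall a b,
      tensm M (idm a) (lunit M b) ∘ assoc M a (munit M) b
      = tensm M (runit M a) (idm b)
}.

Record DaggerData (C : Category) := {
  dag : forall a b : ob C, hom a b -> hom b a
}.
Arguments dag {C} _ {a b} f.

Record DaggerLaws (C : Category) (Dg : DaggerData C) : Prop := {
  dag_invol : forall a b (f : hom a b), dag Dg (dag Dg f) = f;
  dag_id : forall a, dag Dg (idm a) = idm a;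
  dag_comp : forall a b c (f : hom a b) (g : hom b c),
      dag Dg (g ∘ f) = dag Dg f ∘ dag Dg g
}.

Record MonoidalDaggerLaws (C : Category) (M : MonoidalData C)
    (Dg : DaggerData C) : Prop := {
  mdl_monoidal : MonoidalLaws C M;
  mdl_dagger : DaggerLaws C Dg;
  mdl_dag_tens : forall a b a' b' (f : hom a a') (g : hom b b'),
      dag Dg (tensm M f g) = tensm M (dag Dg f) (dag Dg g);
  mdl_assoc_unitary : forall a b c, dag Dg (assoc M a b c) = assoc_inv M a b c;
  mdl_lunit_unitary : forall a, dag Dg (lunit M a) = lunit_inv M a;
  mdl_runit_unitary : forall a, dag Dg (runit M a) = runit_inv M a
}.

(* d : C -> C^op (so dmap reverses arrows), eta : id => d^2 with chosen
   inverse, and the strong monoidal structure of d written, as in the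
   paper, by chi_{a,b} : da (x) db -> d(a (x) b) and u : 1 -> d 1 in C
   (with chosen inverses). *)
Record AntiInvData (C : Category) (M : MonoidalData C) := {
  dob : ob C -> ob C;
  dmap : forall a b, hom a b -> hom (dob b) (dob a);
  eta : forall c, hom c (dob (dob c));
  eta_inv : forall c, hom (dob (dob c)) c;
  chi : forall a b, hom (tens M (dob a) (dob b)) (dob (tens M a b));
  chi_inv : forall a b, hom (dob (tens M a b)) (tens M (dob a) (dob b));
  uu : hom (munit M) (dob (munit M));
  uu_inv : hom (dob (munit M)) (munit M)
}.
Arguments dob {C M} _ c.
Arguments dmap {C M} _ {a b} f.
Arguments eta {C M} _ c.
Arguments eta_inv {C M} _ c.
Arguments chi {C M} _ a b.
Arguments chi_inv {C M} _ a b.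
Arguments uu {C M} _.
Arguments uu_inv {C M} _.

Record AntiInvLaws (C : Category) (M : MonoidalData C) (D : AntiInvData C M)
    : Prop := {
  dmap_id : forall a, dmap D (idm a) = idm (dob D a);
  dmap_comp : forall a b c (f : hom a b) (g : hom b c),
      dmap D (g ∘ f) = dmap D f ∘ dmap D g;
  eta_iso1 : forall c, eta_inv D c ∘ eta D c = idm c;
  eta_iso2 : forall c, eta D c ∘ eta_inv D c = idm _;
  eta_nat : forall a b (f : hom a b),
      eta D b ∘ f = dmap D (dmap D f) ∘ eta D a;
  eta_triangle : forall c, dmap D (eta D c) ∘ eta D (dob D c) = idm (dob D c);
  (* strong monoidal structure of d : C -> C^op (C^op with the same tensor,
     associator alpha^{-1}, unitors lambda^{-1}, rho^{-1}); structure maps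
     of d in C^op are chi^{-1}, u^{-1}; below the axioms are transported
     to C and rewritten in terms of chi, u *)
  chi_iso1 : forall a b, chi_inv D a b ∘ chi D a b = idm _;
  chi_iso2 : forall a b, chi D a b ∘ chi_inv D a b = idm _;
  uu_iso1 : uu_inv D ∘ uu D = idm _;
  uu_iso2 : uu D ∘ uu_inv D = idm _;
  chi_nat : forall a b a' b' (f : hom a a') (g : hom b b'),
      dmap D (tensm M f g) ∘ chi D a' b' = chi D a b ∘ tensm M (dmap D f) (dmap D g);
  chi_assoc : forall a b c,
      dmap D (assoc M a b c) ∘ chi D a (tens M b c)
        ∘ tensm M (idm (dob D a)) (chi D b c) ∘ assoc M (dob D a) (dob D b) (dob D c)
      = chi D (tens M a b) c ∘ tensm M (chi D a b) (idm (dob D c));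
  chi_lunit : forall a,
      chi D (munit M) a ∘ tensm M (uu D) (idm (dob D a))
      = dmap D (lunit M a) ∘ lunit M (dob D a);
  chi_runit : forall a,
      chi D a (munit M) ∘ tensm M (idm (dob D a)) (uu D)
      = dmap D (runit M a) ∘ runit M (dob D a);
  (* eta is a monoidal natural transformation id => d^2, where d^2 carries
     the composite monoidal structure d(chi^{-1}_{a,b}) o chi_{da,db} and
     d(u^{-1}) o u *)
  eta_monoidal_tens : forall a b,
      eta D (tens M a b)
      = dmap D (chi_inv D a b) ∘ chi D (dob D a) (dob D b)
          ∘ tensm M (eta D a) (eta D b);
  eta_monoidal_unit : eta D (munit M) = dmap D (uu_inv D) ∘ uu D
}.

Section Herm.
Variables (C : Category) (M : MonoidalData C) (D : AntiInvData C M).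

Record HObj := { hc : ob C; hh : hom hc (dob D hc); hinv : hom (dob D hc) hc }.

Definition HermOK (X : HObj) : Prop :=
  hinv X ∘ hh X = idm (hc X) /\ hh X ∘ hinv X = idm (dob D (hc X)) /\
  dmap D (hh X) ∘ eta D (hc X) = hh X.

Definition HermOb := { X : HObj | HermOK X }.

Definition HermCat : Category.
Proof.
  refine {| ob := HermOb;
            hom := fun X Y => @hom C (hc (proj1_sig X)) (hc (proj1_sig Y));
            comp := fun X Y Z g f => g ∘ f;
            idm := fun X => idm (hc (proj1_sig X)) |}.
  - intros; apply comp_idl.
  - intros; apply comp_idr.
  - intros; apply comp_assoc.
Defined.

Definition Herm_dagger : DaggerData HermCat :=
  {| dag := fun (X Y : ob HermCat) (f : @hom C (hc (proj1_sig X)) (hc (proj1_sig Y))) =>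
       hinv (proj1_sig X) ∘ dmap D f ∘ hh (proj1_sig Y) |}.

Definition raw_tens (X Y : HObj) : HObj :=
  {| hc := tens M (hc X) (hc Y);
     hh := chi D (hc X) (hc Y) ∘ tensm M (hh X) (hh Y);
     hinv := tensm M (hinv X) (hinv Y) ∘ chi_inv D (hc X) (hc Y) |}.

Definition raw_unit : HObj :=
  {| hc := munit M; hh := uu D; hinv := uu_inv D |}.

Definition Herm_monoidal
    (tok : forall X Y : HermOb, HermOK (raw_tens (proj1_sig X) (proj1_sig Y)))
    (uok : HermOK raw_unit) : MonoidalData HermCat :=
  @Build_MonoidalData HermCat
    (fun X Y : ob HermCat => exist _ (raw_tens (proj1_sig X) (proj1_sig Y)) (tok X Y))
    (fun (X Y X' Y' : ob HermCat) f g => tensm M f g)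
    (exist _ raw_unit uok)
    (fun X Y Z : ob HermCat => assoc M (hc (proj1_sig X)) (hc (proj1_sig Y)) (hc (proj1_sig Z)))
    (fun X Y Z : ob HermCat => assoc_inv M (hc (proj1_sig X)) (hc (proj1_sig Y)) (hc (proj1_sig Z)))
    (fun X : ob HermCat => lunit M (hc (proj1_sig X)))
    (fun X : ob HermCat => lunit_inv M (hc (proj1_sig X)))
    (fun X : ob HermCat => runit M (hc (proj1_sig X)))
    (fun X : ob HermCat => runit_inv M (hc (proj1_sig X))).

End Herm.
Arguments HermOK {C M} D X.
Arguments HermOb {C M} D.
Arguments HermCat {C M} D.
Arguments Herm_dagger {C M} D.
Arguments raw_tens {C M} D X Y.
Arguments raw_unit {C M} D.
Arguments Herm_monoidal {C M} D tok uok.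

(* Main.v *)
Require Import Defs.

Section S.
Variables (C : Category) (M : MonoidalData C) (D : AntiInvData C M).
Hypotheses (ML : MonoidalLaws C M) (AL : AntiInvLaws C M D).
Local Notation hc := (hc C M D).
Local Notation hh := (hh C M D).
Local Notation hinv := (hinv C M D).

Lemma cA {a b c e : ob C} (f:hom a b) (g: hom b c) (h: hom c e): h ∘ (g ∘ f) = h ∘ g ∘ f.
Proof. apply comp_assoc. Qed.
Lemma cl {a b : ob C} (f : hom a b) : idm b ∘ f = f. Proof. apply comp_idl. Qed.
Lemma cr {a b : ob C} (f : hom a b) : f ∘ idm a = f. Proof. apply comp_idr. Qed.
Lemma canc {a b c : ob C} (f : hom a b) (g : hom b a) (x : hom c a) : g ∘ f = idm a -> g ∘ (f ∘ x) = x.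
Proof. intro H. rewrite cA, H. apply cl. Qed.
Lemma tc {a b a' b' a'' b'' : ob C} (f : hom a a') (f' : hom a' a'') (g : hom b b') (g' : hom b' b'') :
  tensm M f' g' ∘ tensm M f g = tensm M (f' ∘ f) (g' ∘ g).
Proof. symmetry. apply (tensm_comp _ _ ML). Qed.
Lemma ti a b : tensm M (idm a) (idm b) = idm (tens M a b).
Proof. apply (tensm_id _ _ ML). Qed.
Lemma dc {a b c : ob C} (f : hom a b) (g : hom b c) : dmap D (g ∘ f) = dmap D f ∘ dmap D g.
Proof. apply (dmap_comp _ _ _ AL). Qed.
Lemma di a : dmap D (idm a) = idm (dob D a).
Proof. apply (dmap_id _ _ _ AL). Qed.

Lemma dinv (X : HObj C M D) : HermOK D X -> dmap D (hinv X) ∘ hh X = eta D (hc X).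
Proof.
  destruct X as [a h hi]; intros [H1 [H2 H3]]; simpl in *.
  rewrite <- H3. rewrite cA, <- dc, H2, di. apply cl.
Qed.

Lemma tens_ok (X Y : HObj C M D) : HermOK D X -> HermOK D Y -> HermOK D (raw_tens D X Y).
Proof.
  destruct X as [a h hi], Y as [b k ki]; intros [H1 [H2 H3]] [K1 [K2 K3]];
  unfold HermOK in *; simpl in *.
  split; [|split].
  - rewrite <- cA, (canc _ _ _ (chi_iso1 _ _ _ AL _ _)), tc, H1, K1. apply ti.
  - rewrite <- cA, (cA (chi_inv D _ _)), tc, H2, K2, ti, cl. apply (chi_iso2 _ _ _ AL).
  - rewrite (eta_monoidal_tens _ _ _ AL), dc, <- !cA.
    rewrite (canc (dmap D (chi_inv D a b)) (dmap D (chi D a b)))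
      by (rewrite <- dc, (chi_iso1 _ _ _ AL); apply di).
    rewrite cA, (chi_nat _ _ _ AL), <- cA, tc, H3, K3. reflexivity.
Qed.

Lemma unit_ok : HermOK D (raw_unit D).
Proof.
  unfold HermOK; simpl. split; [|split].
  - apply (uu_iso1 _ _ _ AL).
  - apply (uu_iso2 _ _ _ AL).
  - rewrite (eta_monoidal_unit _ _ _ AL), cA, <- dc, (uu_iso1 _ _ _ AL), di. apply cl.
Qed.


Definition dagH (X Y : HObj C M D) (f : hom (hc X) (hc Y)) : hom (hc Y) (hc X) :=
  hinv X ∘ dmap D f ∘ hh Y.

Lemma dag_invol (X Y : HObj C M D) f : HermOK D X -> HermOK D Y -> dagH Y X (dagH X Y f) = f.
Proof.
  intros HX HY. pose proof (dinv X HX) as E.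
  destruct X as [a h hi], Y as [b k ki]; destruct HX as [H1 [H2 H3]], HY as [K1 [K2 K3]];
  unfold dagH in *; simpl in *.
  rewrite !dc, <- !cA, E, <- (eta_nat _ _ _ AL), !cA, <- (cA (eta D b)), K3, K1. apply cl.
Qed.

Lemma dag_idm (X : HObj C M D) : HermOK D X -> dagH X X (idm _) = idm _.
Proof.
  destruct X as [a h hi]; intros [H1 [H2 H3]]; unfold dagH; simpl.
  rewrite di, cr. exact H1.
Qed.

Lemma dag_comp (X Y Z : HObj C M D) f g : HermOK D Y ->
  dagH X Z (g ∘ f) = dagH X Y f ∘ dagH Y Z g.
Proof.
  destruct Y as [b k ki]; intros [H1 [H2 H3]]; unfold dagH; simpl in *.
  rewrite dc, <- !cA. rewrite (canc _ _ _ H2). reflexivity.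
Qed.

Lemma dag_tens (X Y X' Y' : HObj C M D) f g :
  dagH (raw_tens D X Y) (raw_tens D X' Y') (tensm M f g) = tensm M (dagH X X' f) (dagH Y Y' g).
Proof.
  destruct X, Y, X', Y'; unfold dagH; simpl.
  rewrite <- !cA, (cA _ (chi D _ _)), (chi_nat _ _ _ AL), <- cA,
    (canc _ _ _ (chi_iso1 _ _ _ AL _ _)), !tc, !cA. reflexivity.
Qed.

Lemma unitary_gen {p q : ob C} (hp : hom p (dob D p)) (hip : hom (dob D p) p)
  (hq : hom q (dob D q)) (al : hom p q) (ali : hom q p) :
  hip ∘ hp = idm p -> al ∘ ali = idm q -> dmap D al ∘ hq ∘ al = hp ->
  hip ∘ dmap D al ∘ hq = ali.
Proof.
  intros H1 H2 H3.
  assert (E: hip ∘ dmap D al ∘ hq ∘ al = idm p) by (rewrite <- H1, <- H3, !cA; reflexivity).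
  rewrite <- (cr (hip ∘ dmap D al ∘ hq)), <- H2, cA, E. apply cl.
Qed.

Lemma tsplit_r {a b a' b' b'' : ob C} (f : hom a a') (g' : hom b b') (g : hom b' b'') :
  tensm M f (g ∘ g') = tensm M (idm a') g ∘ tensm M f g'.
Proof. rewrite tc, cl. reflexivity. Qed.
Lemma tsplit_l {a b a' b' a'' : ob C} (f : hom b b') (g' : hom a a') (g : hom a' a'') :
  tensm M (g ∘ g') f = tensm M g (idm b') ∘ tensm M g' f.
Proof. rewrite tc, cl. reflexivity. Qed.

Lemma assoc_unitary (X Y Z : HObj C M D) : HermOK D X -> HermOK D Y -> HermOK D Z ->
  dagH (raw_tens D (raw_tens D X Y) Z) (raw_tens D X (raw_tens D Y Z))
    (assoc M (hc X) (hc Y) (hc Z)) = assoc_inv M (hc X) (hc Y) (hc Z).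
Proof.
  intros HX HY HZ.
  pose proof (tens_ok _ _ (tens_ok _ _ HX HY) HZ) as [P1 _].
  unfold dagH. eapply unitary_gen; [exact P1 | apply (assoc_iso2 _ _ ML) |].
  destruct X as [a h hi], Y as [b k ki], Z as [c l li]; simpl.
  rewrite tsplit_r, tsplit_l, <- !cA, <- (assoc_nat _ _ ML), !cA, (chi_assoc _ _ _ AL), <- !cA.
  reflexivity.
Qed.

Lemma lunit_unitary (X : HObj C M D) : HermOK D X ->
  dagH (raw_tens D (raw_unit D) X) X (lunit M (hc X)) = lunit_inv M (hc X).
Proof.
  intros HX.
  pose proof (tens_ok _ _ unit_ok HX) as [P1 _].
  unfold dagH. eapply unitary_gen; [exact P1 | apply (lunit_iso2 _ _ ML) |].
  destruct X as [a h hi]; simpl.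
  rewrite <- cA, <- (lunit_nat _ _ ML), cA, <- (chi_lunit _ _ _ AL), <- cA, tc, cl, cr.
  reflexivity.
Qed.

Lemma runit_unitary (X : HObj C M D) : HermOK D X ->
  dagH (raw_tens D X (raw_unit D)) X (runit M (hc X)) = runit_inv M (hc X).
Proof.
  intros HX.
  pose proof (tens_ok _ _ HX unit_ok) as [P1 _].
  unfold dagH. eapply unitary_gen; [exact P1 | apply (runit_iso2 _ _ ML) |].
  destruct X as [a h hi]; simpl.
  rewrite <- cA, <- (runit_nat _ _ ML), cA, <- (chi_runit _ _ _ AL), <- cA, tc, cl, cr.
  reflexivity.
Qed.

End S.

Theorem mainTheorem6 (C : Category) (M : MonoidalData C) (D : AntiInvData C M) :
  MonoidalLaws C M ->
  AntiInvLaws C M D ->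
  exists (tok : forall X Y : HermOb D, HermOK D (raw_tens D (proj1_sig X) (proj1_sig Y)))
         (uok : HermOK D (raw_unit D)),
    MonoidalDaggerLaws (HermCat D) (Herm_monoidal D tok uok) (Herm_dagger D).
Proof.
  intros ML AL.
  exists (fun X Y => tens_ok C M D ML AL _ _ (proj2_sig X) (proj2_sig Y)).
  exists (unit_ok C M D AL).
  split.
  - destruct ML; split; intros; simpl in *; auto.
  - split.
    + intros [X HX] [Y HY] f. exact (dag_invol C M D AL X Y f HX HY).
    + intros [X HX]. exact (dag_idm C M D AL X HX).
    + intros [X HX] [Y HY] [Z HZ] f g. exact (dag_comp C M D AL X Y Z f g HY).
  - intros [X HX] [Y HY] [X' HX'] [Y' HY'] f g.
    exact (dag_tens C M D ML AL X Y X' Y' f g).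
  - intros [X HX] [Y HY] [Z HZ]. exact (assoc_unitary C M D ML AL X Y Z HX HY HZ).
  - intros [X HX]. exact (lunit_unitary C M D ML AL X HX).
  - intros [X HX]. exact (runit_unitary C M D ML AL X HX).
Qed.
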